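(* For any integers $n\ge k\ge 1$ and any positive integers $n_1\le n_2\le\cdots\le n_k$ with $n_1+\cdots+n_k=n$, the directed graph $\mathcal D(n_1,\ldots,n_k)$ is acyclic.
   Context: Let $n_1\le\cdots\le n_k$ be positive integers. The graph $\mathcal G(n_1,\ldots,n_k)$ has vertices $v_{j,a}$ for $1\le j\le k$, $1\le a\le n_j$, and the following edges: the path edges $v_{j,a}v_{j,a+1}$ for $1\le j\le k$, $1\le a<n_j$ (forming paths $P_j=v_{j,1}v_{j,2}\cdots v_{j,n_j}$); and, for each pair $1\le h<j\le k$: (i) $v_{h,a}v_{j,a}$ for each $1\le a<n_h$; (ii) $v_{h,a+1}v_{j,a}$ for each $1\le a<n_h$; (iii) $v_{h,n_h}v_{j,a}$ for each $n_h\le a\le n_j$. Let $f$ be the function defined on vertices $v_{j,a}$ with $a<n_j$ by $f(v_{j,a})=v_{j,a+1}$. The digraph $\mathcal D(n_1,\ldots,n_k)$ (the influence digraph of $f$) has vertex set $V(\mathcal G(n_1,\ldots,n_k))$ and an arc $v\to w$ if and only if $v$ is in the domain of $f$, $v\ne w$, and either $w=f(v)$ or $w$ is adjacent to $f(v)$ in $\mathcal G(n_1,\ldots,n_k)$. *)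

(* Defs.v *)
From mathcomp Require Import all_boot.
Set Implicit Arguments. Unset Strict Implicit. Unset Printing Implicit Defensive.

(* The sequence ns = [:: n_1; ...; n_k]; paper indices are 1-based:
   n_j = nth 0 ns j.-1, and vertex v_{j,a} is encoded as the pair (j, a). *)
Definition nj (ns : seq nat) (j : nat) : nat := nth 0 ns j.-1.

Definition is_vertex (ns : seq nat) (v : nat * nat) : bool :=
  [&& 1 <= v.1, v.1 <= size ns, 1 <= v.2 & v.2 <= nj ns v.1].

(* One orientation of the listed edges of G(n_1,...,n_k). *)
Definition edge_dir (ns : seq nat) (u v : nat * nat) : bool :=
  let: (h, b) := u in let: (j, c) := v in
  (* path edges v_{j,a} v_{j,a+1}, 1 <= a < n_j *)
  [&& h == j, 1 <= b, b < nj ns h & c == b.+1]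
  || (h < j) &&
     [|| (* (i) v_{h,a} v_{j,a}, 1 <= a < n_h *)
         [&& 1 <= b, b < nj ns h & c == b],
         (* (ii) v_{h,a+1} v_{j,a}, 1 <= a < n_h *)
         [&& 1 <= c, c < nj ns h & b == c.+1]
       | (* (iii) v_{h,n_h} v_{j,a}, n_h <= a <= n_j *)
         [&& b == nj ns h, nj ns h <= c & c <= nj ns j]].

Definition adjG (ns : seq nat) (u v : nat * nat) : bool :=
  [&& is_vertex ns u, is_vertex ns v & edge_dir ns u v || edge_dir ns v u].

Definition in_dom_f (ns : seq nat) (v : nat * nat) : bool :=
  is_vertex ns v && (v.2 < nj ns v.1).
Definition f_map (v : nat * nat) : nat * nat := (v.1, v.2.+1).

Definition arcD (ns : seq nat) (v w : nat * nat) : bool :=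
  [&& is_vertex ns w, in_dom_f ns v, v != w &
      (w == f_map v) || adjG ns (f_map v) w].

Definition acyclicD (ns : seq nat) : Prop :=
  forall c : seq (nat * nat), c != [::] -> all (is_vertex ns) c -> ~~ cycle (arcD ns) c.

(* Main.v *)
From Stdlib Require Import Lia.
Require Import Defs.
From mathcomp Require Import all_boot.

Lemma key ns (j a l c : nat) :
  arcD ns (j, a) (l, c) -> in_dom_f ns (l, c) -> a < c \/ (a = c /\ j < l).
Proof.
rewrite /arcD /in_dom_f /adjG /edge_dir /f_map /= => /and4P[_ /andP[_ ha] hne H] /andP[_ hc].
have hne' : ~ (j = l /\ a = c) by move=> [e1 e2]; subst; rewrite eqxx in hne.
case/orP: H => [/eqP [-> ->]|/and3P[_ _ /orP[H|H]]]; first by left; apply/ltP; lia.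
- case/orP: H => [/and3P[/eqP e1 _ /eqP e2]|/andP[/ltP hl /or3P[/andP[_ /eqP e]|/and3P[_ _ /eqP e]|/and3P[/eqP e h2 _]]]].
  + left; apply/ltP; lia.
  + left; apply/ltP; lia.
  + right; split; [lia|by apply/ltP].
  + left; move/leP: h2 => h2; apply/ltP; lia.
- case/orP: H => [/and4P[/eqP e1 _ _ /eqP e2]|/andP[/ltP hl /or3P[/and3P[_ _ /eqP e]|/andP[_ /eqP e]|/and3P[/eqP e h2 _]]]].
  + exfalso; apply: hne'; lia.
  + left; apply/ltP; lia.
  + left; apply/ltP; lia.
  + move/ltP: hc; lia.
Qed.

Lemma nth_le_sumn (s : seq nat) i : nth 0 s i <= sumn s.
Proof.
elim: s i => [|x s IH] [|i] //=; first exact: leq_addr.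
exact: leq_trans (IH i) (leq_addl _ _).
Qed.

Definition phi ns (v : nat * nat) : nat :=
  if in_dom_f ns v then v.2 * (size ns).+1 + v.1 else (sumn ns).+1 * (size ns).+1.

Lemma phi_lt ns v w : arcD ns v w -> phi ns v < phi ns w.
Proof.
case: v w => [j a] [l c] H.
have hv : in_dom_f ns (j, a) by case/and4P: H.
rewrite /phi hv.
have hb : a * (size ns).+1 + j < (sumn ns).+1 * (size ns).+1.
  case/andP: hv => /and4P[_ hj _ _] /= ha.
  have : a < sumn ns by apply: leq_trans ha (nth_le_sumn _ _).
  move/leP: hj => hj; move/ltP => h. simpl in hj. set K := (size ns).+1 in hj *. set S := sumn ns in h *. have hS : a < S by apply/ltP. have hjK : j < K by apply/ltP; rewrite /K; lia. have : a.+1 * K <= S.+1 * K by rewrite leq_mul2r ltnW ?orbT. rewrite mulSn => hle; apply: leq_trans hle; by rewrite [K + _]addnC ltn_add2l.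
case: ifP => hw //.
case: (@key ns j a l c H hw) => [h|[<- h]] /=.
- case/andP: hv => /and4P[_ hj _ _] _.
  have hjK : j < (size ns).+1 by [].
  have : a.+1 * (size ns).+1 <= c * (size ns).+1 by rewrite leq_mul2r h orbT.
  rewrite mulSn => hle; apply: leq_trans (leq_trans hle (leq_addr _ _)).
  by rewrite [_.+1 + _]addnC ltn_add2l.
- by rewrite ltn_add2l.
Qed.

Lemma path_phi ns x s : path (arcD ns) x s -> s != [::] -> phi ns x < phi ns (last x s).
Proof.
elim: s x => [|y s IH] x //= /andP[hxy hp] _.
case: s IH hp => [|z s] IH hp /=; first exact: phi_lt.
move: (IH y hp isT) => /= h2. exact: ltn_trans (phi_lt _ _ _ hxy) h2.
Qed.

Theorem mainTheorem9 (n k : nat) (ns : seq nat) :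
  1 <= k -> k <= n -> size ns = k ->
  all (fun m => 0 < m) ns -> sorted leq ns -> sumn ns = n ->
  acyclicD ns.
Proof.
move=> _ _ _ _ _ _ [|x p] // _ _; apply/negP => /=.
move=> hp; have := path_phi _ _ _ hp.
rewrite last_rcons ltnn => H; suff : false by []; apply: H; by case: p {hp}.
Qed.
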